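(* For any integers $n\ge3$ and $1\le m\le(n-1)^2$, letting $d_n$ denote the in-degree of vertex $n$ in $\mathbb G(n,m)$, the graph $\mathbb G(n-1,m-d_n)$ is well defined and equals the subgraph of $\mathbb G(n,m)$ induced by the vertex subset $\{1,\dots,n-1\}$.
   Context: For integers $n\ge2$ and $0\le m\le n(n-1)$, $\mathbb G(n,m)$ is the simple directed graph on vertex set $\{1,\dots,n\}$ whose arc set is $\{(\lceil \frac{i}{n-1}\rceil,\ n-((i-1)\bmod n)) : i=1,\dots,m\}$, where an arc $(j,k)$ goes from $j$ to $k$ and $a\bmod b\in\{0,\dots,b-1\}$; these $m$ pairs are pairwise distinct pairs of distinct vertices. The subgraph induced by a vertex subset $S$ has vertex set $S$ and all arcs of the graph with both endpoints in $S$. *)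

(* Defs.v *)
From mathcomp Require Import all_boot.
Set Implicit Arguments. Unset Strict Implicit. Unset Printing Implicit Defensive.

Definition ceil_div (a b : nat) : nat := (a + b.-1) %/ b.

Definition Garc (n i : nat) : nat * nat :=
  (ceil_div i n.-1, n - (i.-1 %% n)).

(* Arc list of G(n,m) (vertex set is {1,...,n}). *)
Definition Garcs (n m : nat) : seq (nat * nat) := [seq Garc n i | i <- iota 1 m].

Definition G_well_defined (n m : nat) : Prop := 2 <= n /\ m <= n * n.-1.

Definition indeg (n m v : nat) : nat := count (fun a => a.2 == v) (Garcs n m).

Definition induced_arc (n m k : nat) (a : nat * nat) : bool :=
  [&& a \in Garcs n m, 1 <= a.1 <= k & 1 <= a.2 <= k].

(* Main.v *)
Require Import Defs.
From mathcomp Require Import all_boot zify.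

Lemma div_uniq a b c t : t < b -> a = c*b + t -> a %/ b = c.
Proof. move=> tb ->; rewrite divnMDl; last by lia. by rewrite divn_small // addn0. Qed.
Lemma mod_uniq a b c t : t < b -> a = c*b + t -> a %% b = t.
Proof. move=> tb ->; by rewrite modnMDl modn_small. Qed.

Lemma Garcs_S n m : Garcs n m.+1 = rcons (Garcs n m) (Garc n m.+1).
Proof. by rewrite /Garcs -[m.+1]addn1 iotaD map_cat /= cats1 (addnC 1). Qed.

Lemma decomp N m : exists q r, m = q * N.+1 + r /\ r < N.+1 /\ m %/ N.+1 = q /\ m %% N.+1 = r.
Proof.
exists (m %/ N.+1), (m %% N.+1); split; first exact: divn_eq.
by rewrite ltn_pmod.
Qed.

Lemma indeg_closed N m : indeg N.+1 m N.+1 = (m + N) %/ N.+1.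
Proof.
elim: m => [|m IH]; first by rewrite /indeg /Garcs /= divn_small.
rewrite /indeg Garcs_S -cats1 count_cat -/(indeg _ _ _) IH /= addn0.
have [q [r [e [rlt [_ ->]]]]] := decomp N m.
case: (posnP r) => [r0|rpos].
- have -> : (m + N) %/ N.+1 = q by apply: (@div_uniq _ _ _ (N)); lia.
  have -> : (m.+1 + N) %/ N.+1 = q.+1 by apply: (@div_uniq _ _ _ (0)); lia.
  rewrite r0 subn0 eqxx; lia.
- have -> : (m + N) %/ N.+1 = q.+1 by apply: (@div_uniq _ _ _ (r.-1)); lia.
  have -> : (m.+1 + N) %/ N.+1 = q.+1 by apply: (@div_uniq _ _ _ (r)); lia.
  have -> : (N.+1 - r == N.+1) = false by apply/eqP; lia.
  lia.
Qed.
Lemma tailc N q r m : 2 <= N -> m = q * N.+1 + r -> 0 < r < N.+1 -> m.+1 <= N ^ 2 ->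
  exists c, (m.+1 + N.-1) %/ N = c /\ ((m.+1 - q.+1) + N.-1.-1) %/ N.-1 = c /\ 0 < c <= N.
Proof.
move=> N2 e rr mN.
have hq : q <= N - 2.
  case: (leqP q (N - 2)) => // hq. have := leq_mul hq (leqnn N.+1). rewrite expnS expn1 in mN. nia.
case: (leqP (q + r) N.-1) => hs.
- exists q.+1; split; first by apply: (@div_uniq _ _ _ (q + r)); lia.
  split; last by lia.
  by apply: (@div_uniq _ _ _ (q + r).-1); lia.
- exists q.+2; split; first by apply: (@div_uniq _ _ _ (q + r - N)); lia.
  split; last by lia.
  by apply: (@div_uniq _ _ _ (q + r - N)); lia.
Qed.

Lemma mainN N m : 2 <= N -> m <= N ^ 2 -> forall a,
  (a \in Garcs N (m - indeg N.+1 m N.+1)) = induced_arc N.+1 m N a.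
Proof.
move=> N2; elim: m => [|m IH] mN a; first by rewrite /induced_arc /indeg /Garcs.
have [q [r [e [rlt [_ mr]]]]] := decomp N m.
rewrite !indeg_closed in IH *.
case: (posnP r) => [r0|rpos].
- have dm : (m + N) %/ N.+1 = q by clear IH; apply: (@div_uniq _ _ _ N); lia.
  have dm1 : (m.+1 + N) %/ N.+1 = q.+1 by clear IH; apply: (@div_uniq _ _ _ 0); lia.
  have {}IH := IH (ltnW mN) a.
  rewrite /induced_arc Garcs_S mem_rcons in_cons in IH *.
  rewrite dm in IH; rewrite dm1 subSS IH.
  case: eqP => [->|_] //=.
  by rewrite mr r0 subn0 ltnn !andbF.
- have dm : (m + N) %/ N.+1 = q.+1 by clear IH; apply: (@div_uniq _ _ _ r.-1); lia.
  have dm1 : (m.+1 + N) %/ N.+1 = q.+1 by clear IH; apply: (@div_uniq _ _ _ r); lia.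
  have [c [c1 [c2 cb]]] := @tailc N q r m N2 e (introT andP (conj rpos rlt)) mN.
  have e1 : m.+1 - q.+1 = (m - q.+1).+1 by clear IH; lia.
  have hx : Garc N.+1 m.+1 = Garc N (m - q.+1).+1.
    clear IH; rewrite /Garc /ceil_div /= mr.
    rewrite -e1 c1 c2 /= (@mod_uniq _ _ q r.-1); first (congr pair; clear -rpos rlt; lia); clear -e rpos rlt; lia.
  have b1 : N.+1 - r <= N by clear -rpos; lia.
  have b2 : 0 < N.+1 - r by clear -rlt; lia.
  have {}IH := IH (ltnW mN) a.
  rewrite /induced_arc Garcs_S mem_rcons in_cons in IH *.
  rewrite dm in IH; rewrite dm1 e1.
  rewrite Garcs_S mem_rcons in_cons IH.
  rewrite -hx; case: eqP => [->|_] //=.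
  rewrite /Garc /ceil_div /= mr c1 b1 b2.
  by case/andP: cb => -> ->.
Qed.

Theorem lemma16 (n m : nat) :
  3 <= n -> 1 <= m <= n.-1 ^ 2 ->
  let d := indeg n m n in
  [/\ d <= m,
      G_well_defined n.-1 (m - d)
    & forall a : nat * nat, (a \in Garcs n.-1 (m - d)) = induced_arc n m n.-1 a].
Proof.
case: n => [|N] //= hn /andP [m1 mN].
have N2 : 2 <= N by [].
split; last by move=> a; exact: mainN.
- rewrite indeg_closed.
  have [q [r [e [rlt _]]]] := decomp N m.
  case: (posnP r) => [r0|rpos].
  + rewrite (@div_uniq _ _ q N); [nia|lia|lia].
  + rewrite (@div_uniq _ _ q.+1 r.-1); [nia|lia|lia].
- rewrite /G_well_defined indeg_closed; split => //.
  have [q [r [e [rlt _]]]] := decomp N m.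
  rewrite expnS expn1 in mN.
  case: (posnP r) => [r0|rpos].
  + rewrite (@div_uniq _ _ q N); [|lia|lia].
    have hq : q <= N.-1.
      case: (leqP q N.-1) => // hq. rewrite prednK in hq; last by lia.
      have := leq_mul hq (leqnn N.+1). rewrite mulnS. nia.
    have := leq_mul hq (leqnn N). nia.
  + rewrite (@div_uniq _ _ q.+1 r.-1); [|lia|lia].
    have hq : q <= N.-1.
      case: (leqP q N.-1) => // hq. rewrite prednK in hq; last by lia.
      have := leq_mul hq (leqnn N.+1). rewrite mulnS. nia.
    have ek : m - q.+1 = q * N + r.-1 by nia.
    rewrite ek.
    case: (leqP q (N - 2)) => hq3.
    * have := leq_mul hq3 (leqnn N). nia.
    * have qe : q = N.-1 by lia.
      subst q. have : r <= 1 by nia. nia.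
Qed.
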